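(* In the modified multi-phase process described in the context, every element $x\in S^-_{1/6}$ that is considered by the process passes the preliminary test and all the following $\eta$ tests with probability at least $1-\frac{5}{n^2}$.
   Context: Let $n\ge2$ be an integer such that $m=n/\log_2 n$ is an integer, and let $S'$ be a set of $m$ distinct elements of a totally ordered set. For $\rho\in(0,1]$, $S^-_\rho$ denotes the set of the $\lceil \rho m\rceil$ smallest elements of $S'$ and $S^+_\rho=S'\setminus S^-_\rho$. There are two oracles $\mathcal{O}_1,\mathcal{O}_2$ which can be queried with an element $x\in S'$ and answer ''relevant'' or ''not relevant'' in constant time, all answers being mutually independent; for constants $p_1,p_2\in[0,\tfrac12)$: $\mathcal{O}_1$ reports $x$ relevant with probability at least $1-p_1$ if $x\in S^-_{1/6}$ and at most $p_1$ if $x\in S^+_{1/3}$; $\mathcal{O}_2$ reports $x$ relevant with probability at least $1-p_2$ if $x\in S^-_{1/3}$ and at most $p_2$ if $x\in S^+_{3/4}$. For $q\in[0,\tfrac12)$ let $c_q=\lceil 4(1-q)/(1-2q)^2\rceil$. Let $\eta = 1+\lceil \log_2 \frac{n}{\log_2 n}\rceil$. Modified multi-phase process: the elements of $S'$ are considered one at a time. For the current element $x$, a preliminary test is performed consisting of $8c_{p_1}\lceil \ln n\rceil+1$ queries to $\mathcal{O}_1$ on $x$; it is passed if the majority report $x$ relevant, otherwise $x$ is discarded and the next element is considered. Then, for $i=1,\dots,\eta$, the $i$-th test consists of $2\lceil 2^i\ln n\rceil c_{p_2}+1$ queries to $\mathcal{O}_2$ on $x$ and is passed if the majority report $x$ relevant;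 if $x$ fails a test it is discarded and the next element is considered. The process returns the first element that passes the $\eta$-th test. Here $\ln$ is the natural logarithm. *)

(* Defs.v *)
From HB Require Import structures.
From mathcomp Require Import all_boot all_order all_algebra.
From mathcomp Require Import all_classical all_reals exp.
Set Implicit Arguments. Unset Strict Implicit. Unset Printing Implicit Defensive.
Import Order.TTheory GRing.Theory Num.Theory.
Local Open Scope ring_scope.

Section Defs.
Variable R : realType.

Definition log2 (x : R) : R := ln x / ln 2.

Definition cq (q : R) : nat := `|Num.ceil (4 * (1 - q) / (1 - 2 * q) ^+ 2)|%N.

Definition eta_steps (n : nat) : nat :=
  (1 + `|Num.ceil (log2 (n%:R / log2 n%:R))|)%N.

(* number of queries of test t: t = 0 is the preliminary test (oracle O1),
   t = i >= 1 is the i-th test (oracle O2) *)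
Definition test_size (n : nat) (p1 p2 : R) (t : nat) : nat :=
  if t == 0%N then (8 * cq p1 * `|Num.ceil (ln (n%:R : R))| + 1)%N
  else (2 * `|Num.ceil ((2 : R) ^+ t * ln (n%:R : R))| * cq p2 + 1)%N.

Definition query_idx (et : nat) (Nt : nat -> nat) : finType :=
  {t : 'I_et.+1 & 'I_(Nt (val t))}.

(* Probability that x passes tests 0..et, where the queries are mutually
   independent and a query in test t reports "relevant" with probability
   prob t.  Sample space: all answer vectors w; each test is passed iff a
   strict majority of its answers is "relevant". *)
Definition pass_all_prob (et : nat) (Nt : nat -> nat) (prob : nat -> R) : R :=
  \sum_(w : {ffun query_idx et Nt -> bool} |
         [forall t : 'I_et.+1,
            (Nt (val t) < 2 * #|[set j : 'I_(Nt (val t)) | w (Tagged _ j)]|)%N])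
    \prod_(k : query_idx et Nt)
       (if w k then prob (val (tag k)) else 1 - prob (val (tag k))).

End Defs.

Section Order.
Context {d : Order.disp_t} {T : orderType d}.

(* y \in S^-_rho : y is among the ceil(rho m) smallest elements of S' *)
Definition in_Sminus (R : realType) (S' : seq T) (rho : R) (y : T) : bool :=
  (y \in S') &&
  ((count (fun z => (z < y)%O) S')%:Z < Num.ceil (rho * (size S')%:R))%R.

Definition in_Splus (R : realType) (S' : seq T) (rho : R) (y : T) : bool :=
  (y \in S') && ~~ in_Sminus S' rho y.
End Order.

(* Main.v *)
Require Import Defs.
From HB Require Import structures.
From mathcomp Require Import all_boot all_order all_algebra.
From mathcomp Require Import all_classical all_reals exp sequences.
From mathcomp Require Import zify ring lra.
Import Order.TTheory GRing.Theory Num.Theory.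
Local Open Scope ring_scope.

Section Gen.
Variable R : realType.
Variables (et : nat) (Nt : nat -> nat) (prob : nat -> R).
Hypothesis prob01 : forall t, 0 <= prob t <= 1.
Local Notation I := (query_idx et Nt).

Definition Fw (k : I) (b : bool) : R :=
  if b then prob (val (tag k)) else 1 - prob (val (tag k)).
Definition wt (w : {ffun I -> bool}) : R := \prod_k Fw k (w k).
Definition good (t : 'I_et.+1) (w : {ffun I -> bool}) : bool :=
  (Nt (val t) < 2 * #|[set j : 'I_(Nt (val t)) | w (Tagged _ j)]|)%N.

Lemma passE : pass_all_prob et Nt prob =
  \sum_(w | [forall t, good t w]) wt w.
Proof. by []. Qed.

Lemma Fw_ge0 k b : 0 <= Fw k b.
Proof. by rewrite /Fw; case: b; have /andP[? ?] := prob01 (val (tag k)); lra. Qed.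

Lemma wt_ge0 w : 0 <= wt w.
Proof. by apply: prodr_ge0 => k _; apply: Fw_ge0. Qed.

Lemma wt_sum : \sum_w wt w = 1.
Proof.
rewrite /wt -(bigA_distr_bigA (fun k b => Fw k b)).
by apply: big1 => k _; rewrite big_bool /Fw /=; ring.
Qed.

Lemma union_bound :
  1 - \sum_t \sum_(w | ~~ good t w) wt w <= \sum_(w | [forall t, good t w]) wt w.
Proof.
rewrite -wt_sum (bigID [pred w | [forall t, good t w]]) /=.
suff : \sum_(w | ~~ [forall t, good t w]) wt w <= \sum_t \sum_(w | ~~ good t w) wt w.
  by lra.
apply: (@le_trans _ _ (\sum_(w | ~~ [forall t, good t w]) \sum_(t | ~~ good t w) wt w)).
  apply: ler_sum => w /forallPn [t bt].
  by rewrite (bigD1 t) //= lerDl sumr_ge0 // => *; apply: wt_ge0.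
apply: (@le_trans _ _ (\sum_w \sum_(t | ~~ good t w) wt w)).
  rewrite [X in _ <= X](bigID [pred w | ~~ [forall t, good t w]]) /= lerDl.
  by apply: sumr_ge0 => w _; apply: sumr_ge0 => *; apply: wt_ge0.
under eq_bigr do rewrite big_mkcond.
rewrite exchange_big /= le_eqVlt; apply/orP; left; apply/eqP; apply: eq_bigr => t _.
by rewrite [RHS]big_mkcond.
Qed.

Lemma sigP (G : I -> R) :
  \prod_k G k = \prod_(t : 'I_et.+1) \prod_(j : 'I_(Nt (val t))) G (Tagged _ j).
Proof.
rewrite (@sig_big_dep _ _ _ _ (fun t : 'I_et.+1 => 'I_(Nt (val t))) xpredT (fun _ => xpredT) (fun t j => G (Tagged (fun t : 'I_et.+1 => 'I_(Nt (val t))) j))) /=.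
by apply: eq_bigr => -[t j].
Qed.

Lemma fail_bound (t : 'I_et.+1) (M : nat) (mu : R) :
  Nt (val t) = (2 * M + 1)%N -> 1 <= mu ->
  \sum_(w | ~~ good t w) wt w <=
    mu ^+ M * (prob (val t) / mu + (1 - prob (val t))) ^+ Nt (val t).
Proof.
move=> NE mu1.
have mu0 : 0 < mu by lra.
pose H (k : I) (b : bool) := Fw k b * (if (tag k == t) && b then mu^-1 else 1).
have H0 k b : 0 <= H k b.
  rewrite /H; apply: mulr_ge0; first exact: Fw_ge0.
  by case: ifP => // _; rewrite invr_ge0 ltW.
have key (w : {ffun I -> bool}) : \prod_k (if (tag k == t) && w k then mu^-1 else 1) =
    mu^-1 ^+ #|[set j : 'I_(Nt (val t)) | w (Tagged _ j)]|.
  rewrite sigP (bigD1 t) //= [X in _ * X]big1 ?mulr1; last first.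
    by move=> t' ne; apply: big1 => j _ /=; rewrite (negbTE ne).
  rewrite eqxx /= -big_mkcond /= prodr_const; congr (_ ^+ _).
  by apply: eq_card => j; rewrite inE.
apply: (@le_trans _ _ (\sum_(w | ~~ good t w) mu ^+ M * \prod_k H k (w k))).
  apply: ler_sum => w bad.
  set c := #|[set j : 'I_(Nt (val t)) | w (Tagged _ j)]|.
  have cM : (c <= M)%N by move: bad; rewrite /good -/c NE; lia.
  have -> : \prod_k H k (w k) = wt w * mu^-1 ^+ c.
    by rewrite /H big_split /= key.
  have e : wt w = wt w * (mu ^+ c * mu^-1 ^+ c).
    by rewrite exprVn mulfV ?mulr1 // expf_neq0 // gt_eqF.
  rewrite [X in X <= _]e [X in _ <= X]mulrCA ler_wpM2l ?wt_ge0 // ler_wpM2r //.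
    by apply: exprn_ge0; rewrite invr_ge0; apply: ltW.
  exact: ler_weXn2l.
apply: (@le_trans _ _ (\sum_(w : {ffun I -> bool}) mu ^+ M * \prod_k H k (w k))).
  rewrite [X in _ <= X](bigID [pred w | ~~ good t w]) /= lerDl.
  apply: sumr_ge0 => w _; apply: mulr_ge0; first by apply: exprn_ge0; apply: ltW.
  by apply: prodr_ge0 => *; apply: H0.
rewrite -big_distrr /= -(bigA_distr_bigA H); apply: ler_wpM2l; first by apply: exprn_ge0; apply: ltW.
rewrite sigP (bigD1 t) //= [X in _ * X <= _]big1 ?mulr1; last first.
  by move=> t' ne; apply: big1 => j _; rewrite big_bool /H /Fw /= (negbTE ne) /=; ring.
rewrite [X in X <= _](eq_bigr (fun _ => prob (val t) / mu + (1 - prob (val t)))).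
  by rewrite prodr_const card_ord.
by move=> j _; rewrite big_bool /H /Fw /= eqxx /=; ring.
Qed.

End Gen.

Arguments Fw {R et Nt} prob k b.
Arguments wt {R et Nt} prob w.
Arguments good {et Nt} t w.
Arguments passE {R et Nt} prob.
Arguments union_bound {R et Nt prob}.
Arguments fail_bound {R et Nt prob}.
Section Num.
Variable R : realType.

Lemma abs_ceil_ge (z : R) : z <= (`|Num.ceil z|%N)%:R.
Proof.
rewrite natr_absz; apply: (le_trans (ceil_ge z)).
by rewrite ler_int ler_norm.
Qed.

Lemma pow_le (x y : R) (k : nat) : 0 <= x -> x <= y -> x ^+ k <= y ^+ k.
Proof. by move=> x0 xy; apply: lerXn2r; rewrite // nnegrE (le_trans x0). Qed.

Lemma fail_num (p q : R) (M : nat) : 0 < p -> p < 1/2 -> 1 - p <= q -> q <= 1 ->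
  ((1 - p) / p) ^+ M * (q / ((1 - p) / p) + (1 - q)) ^+ (2 * M + 1)
    <= expR (- ((1 - 2 * p) ^+ 2 * M%:R)).
Proof.
move=> p0 ph qp q1.
have p1 : 1 - p != 0 by rewrite subr_eq0; apply/eqP => E; lra.
have E : q / ((1 - p) / p) + (1 - q) = (q * p + (1 - q) * (1 - p)) / (1 - p).
  by field; rewrite p1 /= gt_eqF.
have h1 : q / ((1 - p) / p) + (1 - q) <= 2 * p.
  by rewrite E ler_pdivrMr; [nra | lra].
have h0 : 0 <= q / ((1 - p) / p) + (1 - q).
  by rewrite E divr_ge0 //; nra.
apply: (@le_trans _ _ (((1 - p) / p) ^+ M * (2 * p) ^+ (2 * M + 1))).
  apply: ler_wpM2l; first by apply: exprn_ge0; apply: divr_ge0; lra.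
  exact: pow_le.
have -> : ((1 - p) / p) ^+ M * (2 * p) ^+ (2 * M + 1) =
          (4 * p * (1 - p)) ^+ M * (2 * p).
  have -> : 4 * p * (1 - p) = ((1 - p) / p) * (2 * p) ^+ 2.
    by field; rewrite gt_eqF.
  by rewrite exprD expr1 exprM [in RHS]exprMn; apply: mulrA.
apply: (@le_trans _ _ ((4 * p * (1 - p)) ^+ M)).
  rewrite ler_piMr //; last by lra.
  by apply: exprn_ge0; nra.
rewrite -mulNr expRM_natr; apply: pow_le; first by nra.
by apply: le_trans (expR_ge1Dx _); lra.
Qed.

Lemma cq_bound (p : R) : 0 <= p -> p < 1/2 -> exists p' : R,
  [/\ 0 < p', p' < 1/2, p <= p' & 2 <= (cq p)%:R * (1 - 2 * p') ^+ 2].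
Proof.
move=> p0 ph.
have hc := abs_ceil_ge (4 * (1 - p) / (1 - 2 * p) ^+ 2).
rewrite -/(cq p) in hc.
have b0 : 0 < (1 - 2 * p) ^+ 2 by apply: exprn_gt0; lra.
have hy : 4 * (1 - p) <= (cq p)%:R * (1 - 2 * p) ^+ 2.
  by rewrite -ler_pdivrMr.
have hb1 : (1 - 2 * p) ^+ 2 <= 1 by nra.
have c0 : 0 <= (cq p)%:R :> R by [].
case: (lerP (1/16) p) => hp.
  by exists p; split => //; lra.
exists (1/16); split; try lra.
have : 15/4 <= (cq p)%:R :> R by nra.
move=> h; rewrite expr2; nra.
Qed.

End Num.
Arguments abs_ceil_ge {R}.
Arguments fail_num {R}.
Arguments cq_bound {R}.

Lemma geo (R : realType) (K : nat) : \sum_(i < K) (2^-1 : R) ^+ i <= 2.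
Proof.
have E : forall K, \sum_(i < K) (2^-1 : R) ^+ i + 2 * (2^-1) ^+ K = 2.
  elim=> [|k IH]; first by rewrite big_ord0 expr0 add0r mulr1.
  by rewrite big_ord_recr /= -[in RHS]IH exprS; field.
rewrite -[X in _ <= X](E K) lerDl; apply: mulr_ge0 => //.
by apply: exprn_ge0; rewrite invr_ge0.
Qed.

Theorem lemma14 (R : realType) (d : Order.disp_t) (T : orderType d)
    (n : nat) (S' : seq T) (p1 p2 : R) (O1 O2 : T -> R) (x : T) :
  (2 <= n)%N ->
  uniq S' ->
  (size S')%:R = n%:R / log2 (n%:R : R) ->
  0 <= p1 -> p1 < 1 / 2 -> 0 <= p2 -> p2 < 1 / 2 ->
  (forall y, 0 <= O1 y <= 1) -> (forall y, 0 <= O2 y <= 1) ->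
  (forall y, in_Sminus S' (1 / 6 : R) y -> 1 - p1 <= O1 y) ->
  (forall y, in_Splus S' (1 / 3 : R) y -> O1 y <= p1) ->
  (forall y, in_Sminus S' (1 / 3 : R) y -> 1 - p2 <= O2 y) ->
  (forall y, in_Splus S' (3 / 4 : R) y -> O2 y <= p2) ->
  in_Sminus S' (1 / 6 : R) x ->
  1 - 5 / (n%:R ^+ 2) <=
    pass_all_prob (eta_steps R n) (test_size n p1 p2)
      (fun t => if t == 0%N then O1 x else O2 x).
Proof.
move=> n2 _ _ p10 p1h p20 p2h O1r O2r H1m _ H2m _ xm.
set prob := fun t : nat => if t == 0%N then O1 x else O2 x.
have prob01 : forall t, 0 <= prob t <= 1 by move=> t; rewrite /prob; case: ifP.
have q1 : 1 - p1 <= O1 x := H1m x xm.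
have q2 : 1 - p2 <= O2 x.
  apply: H2m; move: xm; rewrite /in_Sminus => /andP[-> h] /=.
  apply: (lt_le_trans h); apply: le_ceil; apply: ler_wpM2r => //; lra.
have [p1' [a1 b1 c1 d1]] := cq_bound _ p10 p1h.
have [p2' [a2 b2 c2 d2]] := cq_bound _ p20 p2h.
set E := eta_steps R n.
set Nt := test_size n p1 p2.
have nR : 2 <= n%:R :> R by rewrite (ler_nat R 2 n).
have ln2 : 0 < ln (2:R) by apply: ln_gt0; lra.
have lnn : ln 2 <= ln (n%:R : R) by rewrite ler_ln // posrE; lra.
have key : forall t : 'I_E.+1, \sum_(w : {ffun query_idx E Nt -> bool} | ~~ good t w) wt prob w <=
    expR (- (2 * ln (n%:R : R) + (val t)%:R * ln 2)).
  move=> t.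
  have tb : forall (M : nat) (p p' : R), Nt (val t) = (2 * M + 1)%N ->
      1 - p <= prob (val t) -> p <= p' -> 0 < p' -> p' < 1/2 ->
      2 * ln (n%:R : R) + (val t)%:R * ln 2 <= (1 - 2 * p') ^+ 2 * M%:R ->
      \sum_(w : {ffun query_idx E Nt -> bool} | ~~ good t w) wt prob w <=
        expR (- (2 * ln (n%:R : R) + (val t)%:R * ln 2)).
    move=> M p p' NE qp pp' p'0 p'h hT.
    have mu1 : 1 <= (1 - p') / p' by rewrite ler_pdivlMr //; lra.
    apply: le_trans (fail_bound prob01 _ _ _ NE mu1) _.
    rewrite NE; apply: le_trans (fail_num _ _ _ p'0 p'h _ _) _.
    - by lra.
    - by have /andP[] := prob01 (val t).
    by rewrite ler_expR lerN2.
  move: tb; case: t => [[|t'] ht] tb.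
  - pose L := `|Num.ceil (ln (n%:R : R))|%N.
    apply: (tb (4 * cq p1 * L)%N p1 p1'); [|exact: q1|exact: c1|exact: a1|exact: b1|].
      by rewrite /Nt /test_size /= -/L !mulnA.
    have hL := abs_ceil_ge (ln (n%:R : R)); rewrite -/L in hL.
    rewrite /= !natrM mul0r addr0.
    have L0 : 0 <= (L%:R : R) by [].
    have -> : (1 - 2 * p1') ^+ 2 * (4%:R * (cq p1)%:R * L%:R) =
              4 * (((cq p1)%:R * (1 - 2 * p1') ^+ 2) * L%:R) by ring.
    have h : 2 * L%:R <= ((cq p1)%:R * (1 - 2 * p1') ^+ 2) * L%:R :> R.
      by apply: ler_wpM2r.
    lra.
  - pose L := `|Num.ceil ((2:R) ^+ t'.+1 * ln (n%:R : R))|%N.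
    apply: (tb (L * cq p2)%N p2 p2'); [|exact: q2|exact: c2|exact: a2|exact: b2|].
      by rewrite /Nt /test_size /= -/L mulnA.
    have hL := abs_ceil_ge ((2:R) ^+ t'.+1 * ln (n%:R : R)); rewrite -/L in hL.
    have hp : (t'.+2)%:R <= (2:R) ^+ t'.+1.
      rewrite -natrX ler_nat; exact: ltn_expl.
    have l0 : 0 <= ln (n%:R : R) by lra.
    have h1 : 2 * (L%:R : R) <= (1 - 2 * p2') ^+ 2 * (L * cq p2)%:R.
      have -> : (1 - 2 * p2') ^+ 2 * (L * cq p2)%:R =
                ((cq p2)%:R * (1 - 2 * p2') ^+ 2) * L%:R by rewrite natrM; ring.
      by apply: ler_wpM2r.
    have h2 : (t'.+2)%:R * ln (n%:R : R) <= (2:R) ^+ t'.+1 * ln (n%:R : R).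
      by apply: ler_wpM2r.
    have h3 : (t'.+1)%:R * ln (2 : R) <= (t'.+1)%:R * ln (n%:R : R).
      by apply: ler_wpM2l.
    rewrite /=; move: h2; rewrite -addn1 natrD => h2.
    have h4 : 0 <= (t'.+1)%:R * ln (n%:R : R) by apply: mulr_ge0.
    lra.
rewrite passE.
apply: le_trans (union_bound prob01); rewrite lerD2l lerN2.
apply: (@le_trans _ _ (\sum_(t < E.+1) expR (- (2 * ln (n%:R : R) + (val t)%:R * ln 2)))).
  by apply: ler_sum => t _; apply: key.
have n0 : 0 < (n%:R : R) by lra.
have ex : forall t : nat, expR (- (2 * ln (n%:R : R) + t%:R * ln 2)) =
    (n%:R ^+ 2)^-1 * (2^-1) ^+ t.
  move=> t; rewrite expRN expRD expRM_natl expRM_natl !lnK ?posrE //.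
  by rewrite invfM exprVn.
under eq_bigr do rewrite ex.
rewrite -big_distrr /= mulrC; apply: ler_wpM2r.
  by rewrite invr_ge0; apply: exprn_ge0; apply: ltW.
apply: le_trans (geo R E.+1) _; lra.
Qed.
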